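(* Consider an ESP instance with integer weights, fix $\varepsilon>0$, let $W=\sum_{v\in V}w_v$ and $\omega=\lceil \log W/\log(1+\varepsilon)\rceil$. For each $i\in\{0,\dots,\omega\}$ let $T_i$ be the tree obtained by applying a polynomial-time $5/2$-approximation algorithm for the quota version of the prize-collecting Steiner tree problem with quota $q_i=W-W(1+\varepsilon)^{-i}$ (in particular $T_0=(\{r\},\emptyset)$ and $T_\omega$ contains all vertices of positive weight). Let $H$ be the directed graph with vertex set $\{0,\dots,\omega\}$, arcs $(i,j)$ for all $i<j$, and arc costs $c_{i,j}=W(1+\varepsilon)^{-i}\ell(T_j)$, where $\ell(T)=\sum_{e\in E(T)}\ell_e$. Let $P=(n_0,\dots,n_l)$ with $n_0=0$, $n_l=\omega$ be a shortest $(0,\omega)$-path in $H$, and let $\sigma_{\mathrm{Alg}}$ be the expanding search pattern built in $l$ phases, where in phase $j\in\{1,\dots,l\}$ the edges of $T_{n_j}$ having fewer than two endpoints in $\bigcup_{i=0}^{j-1}V(T_{n_i})$ are appended in an order such that the set of explored vertices stays connected (edges both of whose endpoints are already explored being skipped). Then $L(\sigma_{\mathrm{Alg}})\le z$, where $z$ is the cost of a shortest $(0,\omega)$-path in $H$.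
   Context: ESP: connected undirected graph $G=(V,E)$, root $r$, edge lengths $\ell_e\in\mathbb{Z}_{\ge0}$, vertex weights $w_v\in\mathbb{Z}_{\ge0}$, $V^*=\{v:w_v>0\}$. An expanding search pattern is a sequence $\sigma=(e_1,\dots,e_m)$ of edges with $r\in e_1$ such that $\{e_1,\dots,e_i\}$ is a tree for every $i$. For $v\in V^*\setminus\{r\}$, $k_v=\min\{i:v\in e_i\}$, $k_r=0$, latency $L_v(\sigma)=\sum_{i\le k_v}\ell_{e_i}$, total latency $L(\sigma)=\sum_{v\in V^*}w_vL_v(\sigma)$. Quota version of prize-collecting Steiner tree with quota $q$: find a tree in $G$ containing $r$ whose vertices have total weight at least $q$, minimizing its length; a $5/2$-approximation returns such a tree of length at most $5/2$ times the minimum. The cost of a path in $H$ is the sum of its arc costs. *)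

(* Defs.v *)
From Stdlib Require Import Reals.
From mathcomp Require Import all_boot.
Set Implicit Arguments. Unset Strict Implicit. Unset Printing Implicit Defensive.

Section ESP.
(* Graph G = (V, E): every edge e has the two endpoints src e and dst e
   (undirected: the orientation plays no role). *)
Variables (V E : finType) (src dst : E -> V).

Definition ends (e : E) : {set V} := [set src e; dst e].

Definition adj (ET : {set E}) : rel V :=
  fun x y => [exists e in ET, ((src e == x) && (dst e == y))
                           || ((src e == y) && (dst e == x))].

Definition is_tree (T : {set V} * {set E}) : Prop :=
  [/\ T.1 != set0,
      (forall e, e \in T.2 -> src e \in T.1 /\ dst e \in T.1),
      (forall x y, x \in T.1 -> y \in T.1 -> connect (adj T.2) x y)
    & #|T.2|.+1 = #|T.1| ].

Definition graph_connected : Prop :=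
  forall x y : V, connect (adj setT) x y.

Definition verts_of (s : seq E) : {set V} := \bigcup_(e <- s) ends e.

Definition explored (r : V) (s : seq E) : {set V} := r |: verts_of s.

Definition is_esp (r : V) (sigma : seq E) : Prop :=
  (forall e0, sigma != [::] -> r \in ends (head e0 sigma)) /\
  (forall i, 0 < i <= size sigma ->
     is_tree (verts_of (take i sigma), [set e | e \in take i sigma])).

(* latency of v: 0 for the root; otherwise the total length of e_1..e_{k_v},
   k_v the first index with v in e_{k_v} (if v is never covered this is the
   length of the whole sequence; irrelevant here). *)
Definition latency (r : V) (len : E -> nat) (sigma : seq E) (v : V) : nat :=
  if v == r then 0
  else \sum_(e <- take (find (fun e => v \in ends e) sigma).+1 sigma) len e.

Definition total_latency (r : V) (w : V -> nat) (len : E -> nat)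
  (sigma : seq E) : nat :=
  \sum_(v | 0 < w v) w v * latency r len sigma v.

Definition tree_length (len : E -> nat) (ET : {set E}) : nat :=
  \sum_(e in ET) len e.

Definition set_weight (w : V -> nat) (VT : {set V}) : nat :=
  \sum_(v in VT) w v.

Definition total_weight (w : V -> nat) : nat := \sum_(v : V) w v.

End ESP.

Local Open Scope R_scope.

Definition is_ceil_nat (x : R) (n : nat) : Prop :=
  INR n - 1 < x <= INR n.

Definition quota (W : nat) (eps : R) (i : nat) : R :=
  INR W - INR W * / (1 + eps) ^ i.

Definition approx_ratio : R := 5 / 2.

Definition is_omega (W : nat) (eps : R) (omega : nat) : Prop :=
  is_ceil_nat (ln (INR W) / ln (1 + eps)) omega.

Definition arc_cost (W : nat) (eps : R) (lT : nat -> nat) (i j : nat) : R :=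
  INR W * / (1 + eps) ^ i * INR (lT j).

Definition is_Hpath (omega : nat) (ns : seq nat) : Prop :=
  [/\ ns != [::], head 0%N ns = 0%N, last 0%N ns = omega & sorted ltn ns].

Definition path_cost (c : nat -> nat -> R) (ns : seq nat) : R :=
  \big[Rplus/0]_(p <- zip ns (behead ns)) c p.1 p.2.

(* Main.v *)
Require Import Defs.
From Stdlib Require Import Reals Lra.
From mathcomp Require Import all_boot.

Lemma verts_ofP (V E : finType) (src dst : E -> V) (s : seq E) v :
  (v \in verts_of src dst s) = has (fun e => v \in ends src dst e) s.
Proof.
rewrite /verts_of; elim: s => [|e s IH]; first by rewrite big_nil in_set0.
by rewrite big_cons in_setU IH.
Qed.

Lemma verts_of_cat (V E : finType) (src dst : E -> V) (s t : seq E) :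
  verts_of src dst (s ++ t) = verts_of src dst s :|: verts_of src dst t.
Proof. by apply/setP => v; rewrite in_setU !verts_ofP has_cat. Qed.

Lemma uniq_esp (V E : finType) (src dst : E -> V) r (s : seq E) :
  (forall s1 e s2, s = s1 ++ e :: s2 ->
     (src e \in explored src dst r s1) != (dst e \in explored src dst r s1)) ->
  uniq s.
Proof.
elim/last_ind: s => [|s x IH] H //.
rewrite rcons_uniq; apply/andP; split.
  apply/negP => xs.
  have := H s x [::]; rewrite cats1 => /(_ erefl).
  have Hv : forall u, u \in ends src dst x -> u \in explored src dst r s.
    move=> u ux; rewrite /explored in_setU1 verts_ofP; apply/orP; right.
    by apply/hasP; exists x.
  by rewrite !Hv ?eqxx // /ends !inE eqxx ?orbT.
apply: IH => s1 e s2 Hs; apply: (H s1 e (rcons s2 x)).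
by rewrite Hs rcons_cat.
Qed.

Lemma uniq_nth_flatten (E : eqType) (ss : seq (seq E)) m :
  uniq (flatten ss) -> uniq (nth [::] ss m).
Proof.
elim: ss m => [|s ss IH] [|m] //=; rewrite cat_uniq => /and3P [H1 _ H3] //.
exact: IH.
Qed.

Lemma weight_split (V : finType) (w : V -> nat) (A : {set V}) :
  total_weight w = set_weight w A + \sum_(v | v \notin A) w v.
Proof. by rewrite /total_weight (bigID (fun v => v \in A)). Qed.

Lemma sum_notin (V : finType) (w : V -> nat) (A : {set V}) :
  \sum_(v | v \notin A) w v = \sum_v w v * (v \notin A).
Proof.
rewrite big_mkcond; apply: eq_bigr => v _.
by case: (v \in A); rewrite ?muln0 ?muln1.
Qed.
Lemma sum_take (E : Type) (len : E -> nat) n (s : seq E) :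
  \sum_(e <- take n s) len e <= \sum_(e <- s) len e.
Proof.
by rewrite -{2}(cat_take_drop n s) big_cat leq_addr.
Qed.

Lemma latency_bound (V E : finType) (src dst : E -> V) (r : V) (len : E -> nat)
  (v : V) (ss : seq (seq E)) :
  v != r -> has (fun e => v \in ends src dst e) (flatten ss) ->
  \sum_(e <- take (find (fun e => v \in ends src dst e) (flatten ss)).+1 (flatten ss)) len e
  <= \sum_(m <- iota 0 (size ss))
       (v \notin explored src dst r (flatten (take m ss))) * \sum_(e <- nth [::] ss m) len e.
Proof.
move=> vr; elim: ss => [|s ss IH] //= Hh.
have E0 : explored src dst r [::] = [set r] by rewrite /explored /verts_of big_nil setU0.
rewrite big_cons take0 /= E0 in_set1 (negbTE vr) mul1n.
rewrite -[1]addn0 iotaDl big_map.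
rewrite find_cat has_cat in Hh *.
case: ifP => Hs.
  rewrite takel_cat; last by rewrite has_find in Hs.
  exact: (@leq_trans _ _ _ (sum_take _ _ _ _) (leq_addr _ _)).
rewrite /= Hs /= in Hh.
rewrite take_cat ifF; last by rewrite ltnNge leqW // leq_addr.
rewrite big_cat /= leq_add2l subSn ?leq_addr // addKn.
apply: (@leq_trans _ _ _ (IH Hh)).
rewrite leq_eqVlt; apply/orP; left; apply/eqP; apply: eq_bigr => m _.
rewrite add0n /= /explored verts_of_cat !in_setU1 in_setU.
have -> : (v \in verts_of src dst s) = false by rewrite verts_ofP Hs.
by [].
Qed.
Lemma conn_closed (V E : finType) (src dst : E -> V) (ET : {set E}) (S : {set V}) r x :
  r \in S -> (forall e, e \in ET -> (src e \in S) && (dst e \in S)) ->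
  connect (adj src dst ET) r x -> x \in S.
Proof.
move=> rS HE /connectP [p Hp ->]; elim: p r rS Hp => [|y p IH] r rS //=.
case/andP => Hry Hp; apply: IH Hp.
case/existsP: Hry => e /andP [eET He]; case/andP: (HE e eET) => Hs Hd.
by case/orP: He => /andP [/eqP E1 /eqP E2]; [rewrite -E2 | rewrite -E1].
Qed.

Lemma INR_sum (I : Type) (s : seq I) (F : I -> nat) :
  INR (\sum_(i <- s) F i) = \big[Rplus/IZR Z0]_(i <- s) INR (F i).
Proof.
elim: s => [|i s IH]; first by rewrite !big_nil.
by rewrite !big_cons plus_INR IH.
Qed.

Lemma Rsum_le (I : eqType) (s : seq I) (f g : I -> R) :
  (forall i, i \in s -> Rle (f i) (g i)) ->
  Rle (\big[Rplus/IZR Z0]_(i <- s) f i) (\big[Rplus/IZR Z0]_(i <- s) g i).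
Proof.
elim: s => [|i s IH] H; first by rewrite !big_nil; lra.
rewrite !big_cons; apply: Rplus_le_compat; first by apply: H; rewrite inE eqxx.
by apply: IH => j js; apply: H; rewrite inE js orbT.
Qed.

Lemma zip_sum (f : nat -> nat -> R) a ns :
  \big[Rplus/IZR Z0]_(p <- zip (a :: ns) ns) f p.1 p.2 =
  \big[Rplus/IZR Z0]_(m <- iota 0 (size ns)) f (nth 0 (a :: ns) m) (nth 0 (a :: ns) m.+1).
Proof.
elim: ns a => [|b ns IH] a /=; first by rewrite !big_nil.
rewrite !big_cons IH /=; congr (Rplus _ _).
by rewrite -[1]addn0 iotaDl big_map.
Qed.

Lemma path_cost_nth (c : nat -> nat -> R) (ns : seq nat) :
  ns != [::] ->
  path_cost c ns =
  \big[Rplus/IZR Z0]_(m <- iota 0 (size ns).-1) c (nth 0 ns m) (nth 0 ns m.+1).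
Proof. by case: ns => [//|a ns] _; rewrite /path_cost zip_sum. Qed.

Theorem lemma6
  (V E : finType) (src dst : E -> V) (r : V)
  (len : E -> nat) (w : V -> nat) (eps : R) (omega : nat)
  (T : nat -> {set V} * {set E})
  (ns : seq nat) (sigmas : seq (seq E)) :
  graph_connected src dst ->
  Rlt 0 eps ->
  is_omega (total_weight w) eps omega ->
  (* T_i is the output of a 5/2-approximation for the quota problem, quota q_i *)
  (forall i, i <= omega ->
     [/\ is_tree src dst (T i), r \in (T i).1,
         Rle (quota (total_weight w) eps i) (INR (set_weight w (T i).1))
       & forall T' : {set V} * {set E},
           is_tree src dst T' -> r \in T'.1 ->
           Rle (quota (total_weight w) eps i) (INR (set_weight w T'.1)) ->
           Rle (INR (tree_length len (T i).2))
               (Rmult approx_ratio (INR (tree_length len T'.2)))]) ->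
  T 0 = ([set r], set0) ->
  (forall v, 0 < w v -> v \in (T omega).1) ->
  (* arc costs c_{i,j} = W (1+eps)^(-i) l(T_j) of H *)
  let c := arc_cost (total_weight w) eps (fun j => tree_length len (T j).2) in
  (* P = ns is a shortest (0, omega)-path in H *)
  is_Hpath omega ns ->
  (forall ns', is_Hpath omega ns' -> Rle (path_cost c ns) (path_cost c ns')) ->
  (* sigma_Alg = flatten sigmas; phase j+1 appends  nth [::] sigmas j *)
  let sigma := flatten sigmas in
  size sigmas = (size ns).-1 ->
  (forall j, j < size sigmas ->
     let U := \bigcup_(i < j.+1) (T (nth 0 ns i)).1 in
     let Tj := T (nth 0 ns j.+1) in
     (* appended edges are edges of T_{n_{j+1}} with < 2 endpoints in U *)
     (forall e, e \in nth [::] sigmas j ->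
        e \in Tj.2 /\ ~~ ((src e \in U) && (dst e \in U))) /\
     (* each such edge is appended or skipped (both endpoints explored) *)
     (forall e, e \in Tj.2 -> ~~ ((src e \in U) && (dst e \in U)) ->
        (src e \in explored src dst r (flatten (take j.+1 sigmas))) &&
        (dst e \in explored src dst r (flatten (take j.+1 sigmas))))) ->
  (* explored set stays connected; no appended edge has both ends explored *)
  (forall s1 e s2, sigma = s1 ++ e :: s2 ->
     (src e \in explored src dst r s1) != (dst e \in explored src dst r s1)) ->
  Rle (INR (total_latency src dst r w len sigma)) (path_cost c ns).
Proof.
move=> Hconn Heps Homega Happ HT0 Hw c Hpath Hshort sigma Hsize Hph Hexp.
set W := total_weight w.
set l := size sigmas.
set n := fun m => nth 0 ns m.
set Em := fun m => explored src dst r (flatten (take m sigmas)).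
set a := fun m => \sum_(e <- nth [::] sigmas m) len e.
set A := fun m => (T (n m)).1.
set b := fun m => W - set_weight w (A m).
case: Hpath => Hne Hhead Hlast Hsort.
have Hsns : size ns = l.+1 by rewrite /l Hsize prednK // lt0n size_eq0.
have Hn0 : n 0 = 0 by rewrite /n nth0.
have Hnl : n l = omega by rewrite /n -Hlast -nth_last Hsns.
have Hnle : forall i, n i <= omega.
  move=> i; rewrite /n; case: (ltnP i (size ns)) => Hi; last by rewrite nth_default.
  rewrite -Hnl /n; apply: (sorted_leq_nth leq_trans leqnn) => //.
  - by apply: sub_sorted Hsort => x y /ltnW.
  - by rewrite inE Hsns.
  - by rewrite -ltnS -Hsns.
have rE : forall m, r \in Em m by move=> m; rewrite /Em /explored setU11.
have Emono : forall k k', k <= k' -> Em k \subset Em k'.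
  move=> k k' /subnKC <-; apply/subsetP => x.
  by rewrite /Em /explored takeD flatten_cat verts_of_cat !in_setU1 in_setU => /orP [->|->] //; rewrite ?orbT.
have Key : forall k, k <= l -> forall i, i <= k -> A i \subset Em k.
  elim=> [|k IHk] Hk i Hi.
    rewrite leqn0 in Hi; move/eqP: Hi => ->.
    rewrite /A Hn0 HT0 /=; apply/subsetP => x; rewrite in_set1 => /eqP ->; exact: rE.
  rewrite leq_eqVlt in Hi; case/orP: Hi => [/eqP -> | Hi]; last first.
    exact: subset_trans (IHk (ltnW Hk) i Hi) (Emono _ _ (leqnSn k)).
  have [Htree HrT _ _] := Happ (n k.+1) (Hnle _).
  case: Htree => _ Hedges Hc _.
  have [_ Hph2] := Hph k Hk.
  have HU : \bigcup_(i < k.+1) (T (nth 0 ns i)).1 \subset Em k.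
    by apply/bigcupsP => j _; apply: (IHk (ltnW Hk)); rewrite -ltnS.
  apply/subsetP => x Hx; apply: (@conn_closed _ _ src dst _ (Em k.+1) r x (rE _) _ (Hc r x HrT Hx)).
  move=> e He; case HUe: ((src e \in \bigcup_(i < k.+1) (T (nth 0 ns i)).1)
                      && (dst e \in \bigcup_(i < k.+1) (T (nth 0 ns i)).1)).
    case/andP: HUe => /(subsetP HU) H1 /(subsetP HU) H2.
    by rewrite !(subsetP (Emono _ _ (leqnSn k))).
  exact: Hph2 e He (negbT HUe).
have Huniq : uniq sigma := @uniq_esp _ _ src dst r sigma Hexp.
have Ha : forall m, m < l -> a m <= tree_length len (T (n m.+1)).2.
  move=> m Hm; have [Hph1 _] := Hph m Hm.
  rewrite /a /tree_length.
  apply: (uniq_sub_le_big_cond (le:=leq) leqnn (fun x y => leq_addr y x)).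
  - by rewrite filter_predT; exact: uniq_nth_flatten.
  - by rewrite filter_uniq // index_enum_uniq.
  - move=> e; rewrite filter_predT mem_filter => He.
    by rewrite (Hph1 e He).1 mem_index_enum.
have Hsum : total_latency src dst r w len sigma <= \sum_(m <- iota 0 l) a m * b m.
  apply: (@leq_trans (\sum_(v | 0 < w v) w v * \sum_(m <- iota 0 l) (v \notin Em m) * a m)).
    rewrite /total_latency; apply: leq_sum => v wv; rewrite leq_mul2l; apply/orP; right.
    rewrite /latency; case: eqP => [//|/eqP vr].
    have Hv : v \in Em l.
      by apply: (subsetP (Key l (leqnn l) l (leqnn l))); rewrite /A Hnl; exact: Hw.
    rewrite /Em take_size /explored in_setU1 (negbTE vr) /= verts_ofP in Hv.
    exact: (@latency_bound _ _ src dst r len v sigmas vr Hv).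
  rewrite (eq_bigr (fun v => \sum_(m <- iota 0 l) w v * ((v \notin Em m) * a m))); last first.
    by move=> v _; rewrite big_distrr.
  rewrite exchange_big /= big_seq [X in _ <= X]big_seq; apply: leq_sum => m.
  rewrite mem_iota add0n => /andP [_ Hm].
  rewrite (eq_bigr (fun v => a m * (w v * (v \notin Em m)))); last first.
    by move=> v _; rewrite mulnA mulnC.
  rewrite -big_distrr leq_mul2l; apply/orP; right.
  rewrite /b /W (weight_split _ w (A m)) addKn sum_notin.
  apply: (@leq_trans (\sum_v w v * (v \notin Em m))).
    by rewrite [X in _ <= X](bigID (fun v => 0 < w v)) /= leq_addr.
  have HA := Key m (ltnW Hm) m (leqnn m).
  apply: leq_sum => v _; rewrite leq_mul2l; apply/orP; right.
  case HE: (v \in Em m) => //=.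
  have -> : v \notin A m by apply/negP => /(subsetP HA); rewrite HE.
  by [].
have Hpc : path_cost c ns = \big[Rplus/IZR Z0]_(m <- iota 0 l) c (n m) (n m.+1).
  by rewrite path_cost_nth // Hsns.
apply: Rle_trans (le_INR _ _ (leP Hsum)) _.
rewrite INR_sum Hpc; apply: Rsum_le => m; rewrite mem_iota add0n => /andP [_ Hm].
rewrite mult_INR /c /arc_cost.
have Hsw : set_weight w (A m) <= W by rewrite /W (weight_split _ w (A m)) leq_addr.
have [_ _ Hq _] := Happ (n m) (Hnle m).
rewrite /quota in Hq.
have Hla := le_INR _ _ (leP (Ha m Hm)).
have Hsw' := le_INR _ _ (leP Hsw).
rewrite /b minus_INR; last exact/leP.
rewrite /W /A in Hsw' *.
set x := Rmult (INR (total_weight w)) (Rinv (Rpow_def.pow (Rplus (IZR (Zpos xH)) eps) (n m))) in Hq *.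
rewrite Rmult_comm.
apply: Rmult_le_compat.
- lra.
- exact: pos_INR.
- lra.
- exact: Hla.
Qed.
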